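(* Let $X\subseteq\mathbb{R}^n$ be nonempty, closed and convex, and $F:\mathbb{R}^n\to\mathbb{R}^n$. Suppose (A1) $F$ is $L$-Lipschitz continuous and monotone on $\mathbb{R}^n$; (A2) the solution set $X^*$ of VI$(X,F)$ is nonempty and compact and there is $C>0$ with $\|F(x^* )\|\le C$ for all $x^*\in X^*$; (A3) there is $\alpha>0$ such that $(x-x^* )^TF(x^* )\ge\alpha\,\mathrm{dist}(x,X^* )$ for all $x\in X$ and $x^*\in X^*$. Then for any $x^*\in X^*$, $$F(x)^T(x-x^* )\ge\alpha\,\mathrm{dist}(\Pi_X(x),X^* )-C\,\mathrm{dist}(x,X)\quad\text{for all }x\in\mathbb{R}^n.$$
   Context: VI$(X,F)$: find $x^*\in X$ with $F(x^* )^T(x-x^* )\ge0$ for all $x\in X$; $X^*$ its solution set. $\Pi_X$ is Euclidean projection onto $X$ and $\mathrm{dist}(x,S)=\inf_{y\in S}\|x-y\|$. *)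

(* Defs.v *)
(* Vectors of R^n are row vectors 'rV[R]_n,
   R : realType; the topology on 'rV[R]_n is the (product = Euclidean) one. *)
From HB Require Import structures.
From mathcomp Require Import all_boot all_order all_algebra.
From mathcomp Require Import all_classical all_reals all_analysis.
Set Implicit Arguments. Unset Strict Implicit. Unset Printing Implicit Defensive.
Import Order.TTheory GRing.Theory Num.Theory numFieldNormedType.Exports.
Local Open Scope classical_set_scope.
Local Open Scope ring_scope.

Section Defs.
Context {R : realType} {n : nat}.

Definition inner_prod (u v : 'rV[R]_n) : R := \sum_(i < n) u ord0 i * v ord0 i.

Definition euclid_norm (u : 'rV[R]_n) : R := Num.sqrt (inner_prod u u).

Definition set_dist (x : 'rV[R]_n) (S : set 'rV[R]_n) : R :=
  inf [set euclid_norm (x - y) | y in S].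

Definition convex_setR (X : set 'rV[R]_n) : Prop :=
  forall x y, X x -> X y -> forall t : R, 0 <= t <= 1 ->
    X (t *: x + (1 - t) *: y).

(* Euclidean projection onto X: a nearest point of X to x (unique when X is
   nonempty closed convex); chosen with xget, default 0 if none exists. *)
Definition euclid_proj (X : set 'rV[R]_n) (x : 'rV[R]_n) : 'rV[R]_n :=
  xget 0 [set p | X p /\ forall y, X y -> euclid_norm (x - p) <= euclid_norm (x - y)].

Definition VIsol (X : set 'rV[R]_n) (F : 'rV[R]_n -> 'rV[R]_n) : set 'rV[R]_n :=
  [set xs | X xs /\ forall x, X x -> 0 <= inner_prod (F xs) (x - xs)].

Definition lipschitz_with (L : R) (F : 'rV[R]_n -> 'rV[R]_n) : Prop :=
  forall x y, euclid_norm (F x - F y) <= L * euclid_norm (x - y).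

Definition monotone_op (F : 'rV[R]_n -> 'rV[R]_n) : Prop :=
  forall x y, 0 <= inner_prod (F x - F y) (x - y).

End Defs.

(* Main.v *)
Require Import Defs.
From HB Require Import structures.
From mathcomp Require Import all_boot all_order all_algebra.
From mathcomp Require Import all_classical all_reals all_analysis.
Import Order.TTheory GRing.Theory Num.Theory numFieldNormedType.Exports.
Local Open Scope classical_set_scope.
Local Open Scope ring_scope.
From mathcomp Require Import ring lra.

Section H.
Context {R : realType} {n : nat}.
Implicit Types u v w : 'rV[R]_n.

Lemma ipC u v : inner_prod u v = inner_prod v u.
Proof. by apply: eq_bigr => i _; rewrite mulrC. Qed.

Lemma ipDr u v w : inner_prod u (v + w) = inner_prod u v + inner_prod u w.
Proof. by rewrite /inner_prod -big_split; apply: eq_bigr => i _; rewrite mxE mulrDr. Qed.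

Lemma ipBr u v w : inner_prod u (v - w) = inner_prod u v - inner_prod u w.
Proof. by rewrite /inner_prod -sumrB; apply: eq_bigr => i _; rewrite !mxE mulrBr. Qed.

Lemma ipBl u v w : inner_prod (v - w) u = inner_prod v u - inner_prod w u.
Proof. by rewrite ipC ipBr ![inner_prod u _]ipC. Qed.

Lemma ipDl u v w : inner_prod (v + w) u = inner_prod v u + inner_prod w u.
Proof. by rewrite ipC ipDr ![inner_prod u _]ipC. Qed.

Lemma ipZl a u v : inner_prod (a *: u) v = a * inner_prod u v.
Proof. by rewrite /inner_prod mulr_sumr; apply: eq_bigr => i _; rewrite mxE mulrA. Qed.

Lemma ipZr a u v : inner_prod u (a *: v) = a * inner_prod u v.
Proof. by rewrite ipC ipZl ipC. Qed.

Lemma ip_ge0 u : 0 <= inner_prod u u.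
Proof. by apply: sumr_ge0 => i _; rewrite -expr2 sqr_ge0. Qed.

Lemma CS_sq u v : inner_prod u v ^+ 2 <= inner_prod u u * inner_prod v v.
Proof.
set a := inner_prod u u; set b := inner_prod u v; set c := inner_prod v v.
have quad t : 0 <= t ^+ 2 * a + 2 * t * b + c.
  have := ip_ge0 (t *: u + v).
  rewrite ipDl !ipDr !ipZl !ipZr [inner_prod v u]ipC -/a -/b -/c.
  by move=> h; apply: le_trans h _; rewrite le_eqVlt; apply/orP; left; apply/eqP; ring.
have a0 := ip_ge0 u; have c0 := ip_ge0 v.
have [aeq0|apos] := eqVneq a 0.
  have ui : forall i, u ord0 i = 0.
    move=> i.
    have h0 : forall j : 'I_n, predT j -> 0 <= u ord0 j * u ord0 j.
      by move=> j _; rewrite -expr2 sqr_ge0.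
    have := @psumr_eq0P _ _ predT (fun i => u ord0 i * u ord0 i) h0 aeq0 i isT.
    by move=> /eqP; rewrite mulf_eq0 orbb => /eqP.
  have -> : b = 0 by rewrite /b /inner_prod big1 // => i _; rewrite ui mul0r.
  by rewrite aeq0 expr0n /= mul0r.
have ap : 0 < a by rewrite lt_def apos a0.
have := quad (- b / a).
move=> h.
have e : (- b / a) ^+ 2 * a + 2 * (- b / a) * b + c = c - b ^+ 2 / a.
  by field.
rewrite e subr_ge0 ler_pdivrMr // in h.
by rewrite mulrC.
Qed.

Lemma CS u v : `|inner_prod u v| <= euclid_norm u * euclid_norm v.
Proof.
rewrite /euclid_norm -sqrtrM ?ip_ge0 // -sqrtr_sqr.
by apply: ler_wsqrtr; apply: CS_sq.
Qed.

Lemma coord_le w j : `|w ord0 j| <= euclid_norm w.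
Proof.
rewrite /euclid_norm -sqrtr_sqr; apply: ler_wsqrtr.
rewrite /inner_prod (bigD1 j) //= expr2 lerDl.
by apply: sumr_ge0 => i _; rewrite -expr2 sqr_ge0.
Qed.

Lemma mxnorm_le w : `|w| <= euclid_norm w.
Proof.
rewrite [leLHS]/Num.norm /= mx_normrE; apply: bigmax_le; first exact: sqrtr_ge0.
by move=> [i j] _ /=; rewrite (ord1 i); exact: coord_le.
Qed.

Lemma en_cont x : continuous (fun y : 'rV[R]_n => euclid_norm (x - y)).
Proof.
move=> y; rewrite /euclid_norm /inner_prod.
apply: (@continuous_comp _ _ _ (fun y : 'rV[R]_n => \sum_i (x - y) ord0 i * (x - y) ord0 i) Num.sqrt).
  apply: (@continuous_big _ _ +%R 0 predT); first exact: add_continuous.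
  move=> i _.
  have hc : continuous (fun y : 'rV[R]_n => (x - y) ord0 i).
    move=> z; rewrite /continuous_at.
    have -> : (fun y0 : 'rV[R]_n => (x - y0) ord0 i) = (fun y0 => x ord0 i - y0 ord0 i).
      by apply: funext => y0; rewrite !mxE.
    rewrite !mxE; apply: (cvgB (cvg_cst _) (@coord_continuous R 1 n ord0 i z)).
  by move=> z; exact: (cvgM (hc z) (hc z)).
exact: sqrt_continuous.
Qed.

Lemma proj_ex (X : set 'rV[R]_n) x : X !=set0 -> closed X ->
  exists p, X p /\ forall y, X y -> euclid_norm (x - p) <= euclid_norm (x - y).
Proof.
move=> [y0 Xy0] clX.
pose f := fun y : 'rV[R]_n => euclid_norm (x - y).
pose A := X `&` (f @^-1` [set r | r <= f y0]).
have A0 : A !=set0 by exists y0; split => //=.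
have clA : closed A.
  apply: closedI => //; apply: preimage_closed; last exact: closed_le.
  by move=> z _; exact: en_cont.
have bA : bounded_set A.
  exists (`|x| + f y0); split; first by rewrite num_real.
  move=> M hM y [_ hy] /=.
  apply: le_trans (_ : `|x - (x - y)| <= _); first by rewrite opprB addrC subrK.
  apply: le_trans (ler_normB _ _) _; apply: ltW; apply: le_lt_trans hM.
  by rewrite lerD2l; apply: le_trans (mxnorm_le _) hy.
have cA : compact A := bounded_closed_compact bA clA.
have [c cA' cmin] := compact_EVT_min A0 cA (continuous_subspaceT (en_cont x)).
move: cA'; rewrite inE => -[Xc hc].
exists c; split=> // y Xy.
case: (leP (f y) (f y0)) => h.
  by apply: (cmin y); rewrite inE; split.
exact: le_trans hc (ltW h).
Qed.

End H.


Theorem lemma7 (R : realType) (n : nat) (X : set 'rV[R]_n)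
  (F : 'rV[R]_n -> 'rV[R]_n) (L C alpha : R) :
  X !=set0 -> closed X -> convex_setR X ->
  (* (A1) *)
  lipschitz_with L F -> monotone_op F ->
  (* (A2) *)
  VIsol X F !=set0 -> compact (VIsol X F) ->
  0 < C -> (forall xs, VIsol X F xs -> euclid_norm (F xs) <= C) ->
  (* (A3) *)
  0 < alpha ->
  (forall x xs, X x -> VIsol X F xs ->
     alpha * set_dist x (VIsol X F) <= inner_prod (x - xs) (F xs)) ->
  forall xs, VIsol X F xs ->
  forall x : 'rV[R]_n,
    alpha * set_dist (euclid_proj X x) (VIsol X F) - C * set_dist x X <= inner_prod (F x) (x - xs).
Proof.
move=> X0 clX _ _ mono _ _ C0 hC alpha0 hA3 xs hxs x.
have [q [Xq qmin]] := @proj_ex R n X x X0 clX.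
set p := euclid_proj X x.
have [Xp pmin] : X p /\ forall y, X y -> euclid_norm (x - p) <= euclid_norm (x - y).
  have hP : exists q, [set p | X p /\ forall y, X y -> euclid_norm (x - p) <= euclid_norm (x - y)] q.
    by exists q.
  exact: (xgetPex 0 hP).
have hd : euclid_norm (x - p) <= set_dist x X.
  apply: lb_le_inf; first by exists (euclid_norm (x - p)); exists p.
  by move=> r [y Xy <-]; exact: pmin.
have h1 := hA3 p xs Xp hxs.
have h2 := mono x xs; rewrite ipBl in h2.
have e : inner_prod (F xs) (x - xs) = inner_prod (p - xs) (F xs) + inner_prod (F xs) (x - p).
  rewrite ipC [inner_prod (F xs) (x - p)]ipC -ipDl; congr inner_prod.
  by rewrite [RHS]addrC addrA subrK.
have h3 : - (C * euclid_norm (x - p)) <= inner_prod (F xs) (x - p).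
  have := CS (F xs) (x - p); rewrite ler_norml => /andP[h _]; apply: le_trans h.
  by rewrite lerN2; apply: ler_wpM2r; [exact: sqrtr_ge0 | exact: hC].
have h4 : C * euclid_norm (x - p) <= C * set_dist x X by apply: ler_wpM2l => //; exact: ltW.

lra.
Qed.
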